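(* Let $(a_i)_{i=1}^n$, $a_i=(m_i,x_i,v_i)$, be a system of $n$ particles (as defined in the context) with sticky trajectories $\gamma_1,\dots,\gamma_n$. Let $P_0=(0,0)$ and $P_k=\left(\sum_{i=1}^k m_i,\ \sum_{i=1}^k m_i v_i\right)$ for $1\le k\le n$, let $f:[0,\sum_{i=1}^n m_i]\to\mathbb{R}$ be the continuous piecewise linear function whose graph is the union of the segments $[P_{k-1},P_k]$, and let $r$ be the convex envelope of $f$. Let $0=k_0<k_1<\cdots<k_\ell=n$ be all indices $k$ for which $P_k$ lies on the graph of $r$, and for $1\le j\le\ell$ let $T_j=\{a_i: k_{j-1}<i\le k_j\}$. Then for $i\neq j$, no particle of $T_i$ ever collides with a particle of $T_j$, i.e. $\gamma_p(t)\neq\gamma_q(t)$ for all $t\ge 0$ whenever $a_p\in T_i$, $a_q\in T_j$.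
   Context: A particle is a triple $a=(m,x,v)\in\mathbb{R}_{>0}\times\mathbb{R}\times\mathbb{R}$ (mass, initial position, initial velocity). A system of $n$ particles is an $n$-tuple $(a_i)_{i=1}^n$ with $x_i<x_j$ iff $i<j$. To each particle is associated a unique continuous piecewise linear trajectory $\gamma_i:[0,\infty)\to\mathbb{R}$ such that: (1) $\gamma_i(0)=x_i$ and $\dot\gamma_i(0+)=v_i$; (2) (stickiness) if $\gamma_i(s)=\gamma_j(s)$ then $\gamma_i(t)=\gamma_j(t)$ for all $t\ge s$; (3) (conservation of momentum) if $\gamma_{i_1}(t)=\cdots=\gamma_{i_p}(t)\neq\gamma_i(t)$ for all other $i$, at some $t>0$, then $\dot\gamma_{i_q}(t+)=\frac{\sum_{k=1}^p m_{i_k}\dot\gamma_{i_k}(t-)}{\sum_{k=1}^p m_{i_k}}$ for each $q$. Here $\dot\gamma(t\pm)$ denotes one-sided derivatives. The convex envelope of $f$ is $\sup\{g\le f: g \text{ convex}\}$. *)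

(* Defs.v *)
From HB Require Import structures.
From mathcomp Require Import all_boot all_order all_algebra.
From mathcomp Require Import all_classical all_reals all_analysis.
Set Implicit Arguments.
Unset Strict Implicit.
Unset Printing Implicit Defensive.
Import Order.TTheory GRing.Theory Num.Theory numFieldNormedType.Exports.
Local Open Scope ring_scope.

Section StickyDefs.
Context {R : realType}.

Definition affine_on (g : R -> R) (a b : R) : Prop :=
  exists alpha beta : R, forall y, a <= y <= b -> g y = alpha + beta * y.

Definition cont_pw_linear (g : R -> R) : Prop :=
  ({within [set y : R | 0 <= y], continuous g})%classic /\
  exists s : seq R, forall a b, 0 <= a -> a <= b ->
    (forall c, c \in s -> ~ (a < c < b)) -> affine_on g a b.

Definition rslope (g : R -> R) (t u : R) : Prop :=
  exists2 e : R, 0 < e & forall s, t <= s <= t + e -> g s = g t + u * (s - t).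

Definition lslope (g : R -> R) (t w : R) : Prop :=
  exists2 e : R, 0 < e &
    forall s, t - e <= s <= t -> 0 <= s -> g s = g t + w * (s - t).

(* a system of n particles a_i = (m i, x i, v i), indices 0..n-1 *)
Definition particle_system (n : nat) (m x : 'I_n -> R) : Prop :=
  (forall i, 0 < m i) /\ (forall i j : 'I_n, x i < x j <-> (i < j)%N).

Definition sticky_trajectories (n : nat) (m x v : 'I_n -> R)
    (gamma : 'I_n -> R -> R) : Prop :=
  [/\ forall i, cont_pw_linear (gamma i),
      forall i, gamma i 0 = x i,
      forall i, rslope (gamma i) 0 (v i),
      forall i j s t, 0 <= s -> s <= t -> gamma i s = gamma j s ->
                      gamma i t = gamma j t &
      forall t, 0 < t -> forall (w : 'I_n -> R) (i : 'I_n),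
        (forall j, gamma j t = gamma i t -> lslope (gamma j) t (w j)) ->
        rslope (gamma i) t
          ((\sum_(j | gamma j t == gamma i t) m j * w j)
             / (\sum_(j | gamma j t == gamma i t) m j))].

(* first coordinate of P_k : sum_{i=1}^k m_i  (particles indexed from 0) *)
Definition mass_prefix (n : nat) (m : 'I_n -> R) (k : nat) : R :=
  \sum_(i < n | (i < k)%N) m i.

(* second coordinate of P_k : sum_{i=1}^k m_i v_i *)
Definition mom_prefix (n : nat) (m v : 'I_n -> R) (k : nat) : R :=
  \sum_(i < n | (i < k)%N) m i * v i.

Definition convex_on (a b : R) (g : R -> R) : Prop :=
  forall y z l, a <= y <= b -> a <= z <= b -> 0 <= l <= 1 ->
    g (l * y + (1 - l) * z) <= l * g y + (1 - l) * g z.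

Definition convex_envelope (a b : R) (f : R -> R) : R -> R :=
  fun y => sup [set u : R | exists g : R -> R,
      [/\ convex_on a b g, (forall z, a <= z <= b -> g z <= f z) & u = g y]]%classic.

End StickyDefs.

(* Main.v *)
Require Import Defs.
From HB Require Import structures.
From mathcomp Require Import all_boot all_order all_algebra.
From mathcomp Require Import all_classical all_reals all_analysis.
From mathcomp Require Import ring lra zify.
Import Order.TTheory GRing.Theory Num.Theory numFieldNormedType.Exports.
Local Open Scope ring_scope.



Section Slopes.
Context {R : realType}.
Implicit Types (g h : R -> R) (t u : R).

Lemma pw_eps (s : seq R) (t : R) :
  exists2 e : R, 0 < e & forall c, c \in s -> c != t -> e <= `|c - t|.
Proof.
elim: s => [|c s [e e0 He]]; first by exists 1 => //.
have [->|ct] := eqVneq c t.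
  by exists e => // c'; rewrite inE => /orP[/eqP->|/He]; [rewrite eqxx|].
exists (Num.min e `|c - t|); first by rewrite lt_min e0 normr_gt0 subr_eq0.
move=> c'; rewrite inE => /orP[/eqP->|/He H] ct'; rewrite ge_min.
  by rewrite lexx orbT.
by rewrite H // ct'.
Qed.

Lemma cpl_rslope g t : cont_pw_linear g -> 0 <= t -> exists u, rslope g t u.
Proof.
move=> [_ [s Hs]] t0.
have [e e0 He] := pw_eps s t.
have [al [be Hab]] : affine_on g t (t + e).
  apply: Hs => //; first lra.
  move=> c cs /andP[tc ce].
  have ct : c != t by rewrite gt_eqF.
  have := He c cs ct; rewrite ger0_norm; lra.
exists be, e => // s' Hs'.
rewrite Hab // Hab; first ring.
by rewrite lexx /=; lra.
Qed.

Lemma cpl_lslope g t : cont_pw_linear g -> 0 < t -> exists w, lslope g t w.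
Proof.
move=> [_ [s Hs]] t0.
have [e e0 He] := pw_eps s t.
set e' := Num.min e t.
have e'0 : 0 < e' by rewrite lt_min e0 t0.
have e'e : e' <= e by rewrite ge_min lexx.
have e't : e' <= t by rewrite ge_min lexx orbT.
have [al [be Hab]] : affine_on g (t - e') t.
  apply: Hs => //; first lra; first lra.
  move=> c cs /andP[tc ce].
  have ct : c != t by rewrite lt_eqF.
  have := He c cs ct; rewrite ltr0_norm; lra.
exists be, e' => // s' Hs' _.
rewrite Hab // Hab; first ring.
by rewrite lexx /= andbT; lra.
Qed.

Lemma rslope_uniq g t u1 u2 : rslope g t u1 -> rslope g t u2 -> u1 = u2.
Proof.
move=> [e1 e10 H1] [e2 e20 H2].
set d := Num.min e1 e2.
have d0 : 0 < d by rewrite lt_min e10 e20.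
have d1 : d <= e1 by rewrite ge_min lexx.
have d2 : d <= e2 by rewrite ge_min lexx orbT.
have E1 := H1 (t + d); have E2 := H2 (t + d).
have a1 : t <= t + d <= t + e1 by apply/andP; lra.
have a2 : t <= t + d <= t + e2 by apply/andP; lra.
have : u1 * d = u2 * d.
  have := E1 a1; rewrite E2 // (_ : t + d - t = d); last by ring.
  by move/addrI.
have dn : d != 0 by rewrite gt_eqF.
by move=> E; apply: (mulIf dn).
Qed.

Lemma rslope_ext g h t u : (forall s, g s = h s) -> rslope g t u -> rslope h t u.
Proof. by move=> E [e e0 H]; exists e => // s Hs; rewrite -!E H. Qed.

Lemma lslope_ext g h t u : (forall s, g s = h s) -> lslope g t u -> lslope h t u.
Proof. by move=> E [e e0 H]; exists e => // s Hs s0; rewrite -!E H. Qed.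

Lemma rslopeD g h t a b : rslope g t a -> rslope h t b ->
  rslope (fun s => g s + h s) t (a + b).
Proof.
move=> [e1 e10 H1] [e2 e20 H2].
set d := Num.min e1 e2.
have d0 : 0 < d by rewrite lt_min e10 e20.
have d1 : d <= e1 by rewrite ge_min lexx.
have d2 : d <= e2 by rewrite ge_min lexx orbT.
exists d => // s /andP[s1 s2].
have a1 : t <= s <= t + e1 by apply/andP; lra.
have a2 : t <= s <= t + e2 by apply/andP; lra.
rewrite (H1 _ a1) (H2 _ a2); ring.
Qed.

Lemma lslopeD g h t a b : lslope g t a -> lslope h t b ->
  lslope (fun s => g s + h s) t (a + b).
Proof.
move=> [e1 e10 H1] [e2 e20 H2].
set d := Num.min e1 e2.
have d0 : 0 < d by rewrite lt_min e10 e20.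
have d1 : d <= e1 by rewrite ge_min lexx.
have d2 : d <= e2 by rewrite ge_min lexx orbT.
exists d => // s /andP[s1 s2] s0.
have a1 : t - e1 <= s <= t by apply/andP; lra.
have a2 : t - e2 <= s <= t by apply/andP; lra.
rewrite (H1 _ a1 s0) (H2 _ a2 s0); ring.
Qed.

Lemma rslopeZ g t a c : rslope g t a -> rslope (fun s => c * g s) t (c * a).
Proof. by move=> [e e0 H]; exists e => // s Hs; rewrite H //; ring. Qed.

Lemma lslopeZ g t a c : lslope g t a -> lslope (fun s => c * g s) t (c * a).
Proof. by move=> [e e0 H]; exists e => // s Hs s0; rewrite H //; ring. Qed.

Lemma rslope_sum (I : Type) (r : seq I) (P : pred I) (F : I -> R -> R)
  (U : I -> R) t : (forall i, P i -> rslope (F i) t (U i)) ->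
  rslope (fun s => \sum_(i <- r | P i) F i s) t (\sum_(i <- r | P i) U i).
Proof.
move=> HF; elim: r => [|i r IH].
  rewrite big_nil; apply: (@rslope_ext (fun _ => 0)) => [s|]; first by rewrite big_nil.
  by exists 1 => // s _; rewrite mul0r addr0.
rewrite big_cons; case: ifP => Pi.
  apply: (@rslope_ext (fun s => F i s + \sum_(j <- r | P j) F j s)).
    by move=> s; rewrite big_cons Pi.
  exact: rslopeD (HF i Pi) IH.
by apply: rslope_ext IH => s; rewrite big_cons Pi.
Qed.

Lemma lslope_sum (I : Type) (r : seq I) (P : pred I) (F : I -> R -> R)
  (U : I -> R) t : (forall i, P i -> lslope (F i) t (U i)) ->
  lslope (fun s => \sum_(i <- r | P i) F i s) t (\sum_(i <- r | P i) U i).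
Proof.
move=> HF; elim: r => [|i r IH].
  rewrite big_nil; apply: (@lslope_ext (fun _ => 0)) => [s|]; first by rewrite big_nil.
  by exists 1 => // s _; rewrite mul0r addr0.
rewrite big_cons; case: ifP => Pi.
  apply: (@lslope_ext (fun s => F i s + \sum_(j <- r | P j) F j s)).
    by move=> s; rewrite big_cons Pi.
  exact: lslopeD (HF i Pi) IH.
by apply: lslope_ext IH => s; rewrite big_cons Pi.
Qed.

End Slopes.



Section Aux.
Context {R : realType}.

Lemma small_pert (c r : R) : 0 < c ->
  exists2 e : R, 0 < e & forall d, 0 <= d <= e -> 0 < c + r * d.
Proof.
move=> c0; have [r0|r0] := leP 0 r.
  exists 1 => // d /andP[d0 _]; have := mulr_ge0 r0 d0; lra.
exists (- c / (2 * r)).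
  by rewrite mulNr oppr_gt0 pmulr_rlt0 // invr_lt0; lra.
move=> d /andP[d0 de].
have E : r * (- c / (2 * r)) = - c / 2 by field; rewrite lt_eqF.
have : 0 <= r * (d - (- c / (2 * r))) by apply: mulr_le0; lra.
rewrite mulrBr E; lra.
Qed.

Lemma small_pert_neg (c r : R) : c < 0 ->
  exists2 e : R, 0 < e & forall d, 0 <= d <= e -> c + r * d < 0.
Proof.
move=> c0; have c0' : 0 < - c by lra.
have [e e0 H] := small_pert (- c) (- r) c0'.
by exists e => // d /H; rewrite mulNr; lra.
Qed.

End Aux.



Section Dyn.
Context {R : realType} (n : nat) (m x v : 'I_n -> R) (gamma : 'I_n -> R -> R).
Hypothesis Hps : particle_system m x.
Hypothesis Hst : sticky_trajectories m x v gamma.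

Lemma gr i t : 0 <= t -> exists u, rslope (gamma i) t u.
Proof. by case: Hst => Hc _ _ _ _; apply: cpl_rslope. Qed.

Lemma gl i t : 0 < t -> exists w, lslope (gamma i) t w.
Proof. by case: Hst => Hc _ _ _ _; apply: cpl_lslope. Qed.

Lemma stick i j s t : 0 <= s -> s <= t -> gamma i s = gamma j s -> gamma i t = gamma j t.
Proof. by case: Hst => _ _ _ H _; apply: H. Qed.

Lemma g0 i : gamma i 0 = x i.
Proof. by case: Hst. Qed.

Lemma dr a b t : 0 <= t -> exists r, rslope (fun s => gamma b s + (-1) * gamma a s) t r.
Proof.
move=> t0; have [ua Ha] := gr a t t0; have [ub Hb] := gr b t t0.
by eexists; apply: (rslopeD _ _ _ _ _ Hb (rslopeZ _ _ _ (-1) Ha)).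
Qed.

Lemma dl a b t : 0 < t -> exists r, lslope (fun s => gamma b s + (-1) * gamma a s) t r.
Proof.
move=> t0; have [ua Ha] := gl a t t0; have [ub Hb] := gl b t t0.
by eexists; apply: (lslopeD _ _ _ _ _ Hb (lslopeZ _ _ _ (-1) Ha)).
Qed.

Lemma traj_order (a b : 'I_n) t : (a <= b)%N -> 0 <= t -> gamma a t <= gamma b t.
Proof.
rewrite leq_eqVlt => /orP[/eqP/val_inj->|ab] t0; first by [].
have xab : x a < x b by case: Hps => _ H; apply/H.
rewrite leNgt; apply/negP => dt.
pose d s := gamma b s + (-1) * gamma a s.
pose Z := [set s | 0 <= s /\ d s <= 0]%classic.
have Zt : Z t by split => //; rewrite /d; lra.
have hZ : has_inf Z by split; [exists t | exists 0 => s [] ].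
set T := inf Z.
have T0 : 0 <= T by apply: lb_le_inf; [exists t | move=> s []].
have Tlb : forall s, Z s -> T <= s by move=> s Zs; apply: ge_inf => //; case: hZ.
have before : forall s, 0 <= s < T -> 0 < d s.
  move=> s /andP[s0 sT]; rewrite ltNge; apply/negP => ds.
  by have := Tlb s (conj s0 ds); lra.
have dT1 : d T <= 0.
  rewrite leNgt; apply/negP => dTp.
  have [r [e e0 He]] := dr a b T T0.
  have [ep ep0 Hep] := small_pert _ r dTp.
  have mn : 0 < Num.min e ep by rewrite lt_min e0 ep0.
  have [z Zz zT] := inf_adherent mn hZ.
  have Tz := Tlb z Zz.
  have m5 : Num.min e ep <= e by rewrite ge_min lexx.
  have m6 : Num.min e ep <= ep by rewrite ge_min lexx orbT.
  have := He z; rewrite -/(d z) -/(d T).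
  have -> : T <= z <= T + e.
    by apply/andP; split => //; move: zT; rewrite -/T; lra.
  move=> /(_ isT) Edz.
  have : 0 < d T + r * (z - T).
    apply: Hep; apply/andP; split; first lra.
    by move: zT; rewrite -/T; lra.
  by case: Zz => _; lra.
have dT2 : 0 <= d T.
  have [->|Tp] := eqVneq T 0.
    by rewrite /d !g0; lra.
  have Tp' : 0 < T by rewrite lt_def Tp.
  rewrite leNgt; apply/negP => dTn.
  have [r [e e0 He]] := dl a b T Tp'.
  have [ep ep0 Hep] := small_pert_neg _ (- r) dTn.
  have M0 : 0 < Num.min (Num.min e ep) T by rewrite !lt_min e0 ep0 Tp'.
  have m3 : Num.min (Num.min e ep) T <= T by rewrite ge_min lexx orbT.
  have m4 : Num.min (Num.min e ep) T <= Num.min e ep by rewrite ge_min lexx.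
  have m5 : Num.min e ep <= e by rewrite ge_min lexx.
  have m6 : Num.min e ep <= ep by rewrite ge_min lexx orbT.
  move: M0 m3 m4; set M := Num.min (Num.min e ep) T => M0 m3 m4.
  pose del := M / 2.
  have del0 : 0 < del by rewrite /del; lra.
  have delT : del < T by rewrite /del; lra.
  have := He (T - del); rewrite -/(d T) -/(d (T - del)).
  have -> : T - e <= T - del <= T by apply/andP; rewrite /del; lra.
  move=> /(_ isT); have -> : 0 <= T - del by lra.
  move=> /(_ isT) E.
  have : d T + - r * del < 0 by apply: Hep; apply/andP; rewrite /del; lra.
  have := before (T - del); rewrite E.
  have -> : 0 <= T - del < T by apply/andP; lra.
  move=> /(_ isT); lra.
have : gamma b T = gamma a T by rewrite /d in dT1 dT2; lra.
move/(stick _ _ _ _ T0 (Tlb t Zt)) => E; lra.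
Qed.


Lemma first_time (a b : 'I_n) t0 : 0 <= t0 -> gamma a t0 = gamma b t0 ->
  gamma a 0 != gamma b 0 ->
  exists T, [/\ 0 < T, gamma a T = gamma b T &
                forall s, 0 <= s < T -> gamma a s <> gamma b s].
Proof.
move=> t00 Et0 N0.
pose Z := [set s | 0 <= s /\ gamma a s = gamma b s]%classic.
have Zt : Z t0 by [].
have hZ : has_inf Z by split; [exists t0 | exists 0 => s [] ].
set T := inf Z.
have T0 : 0 <= T by apply: lb_le_inf; [exists t0 | move=> s []].
have Tlb : forall s, Z s -> T <= s by move=> s Zs; apply: ge_inf => //; case: hZ.
have [r [e e0 He]] := dr a b T T0.
have [z [z0 Zz] zT] := inf_adherent e0 hZ.
have Tz := Tlb z (conj z0 Zz).
pose z' := (z + (T + e)) / 2.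
have zz' : z < z' by rewrite /z' -/T; lra.
have z'e : z' <= T + e by rewrite /z' -/T; lra.
have Zz' : gamma a z' = gamma b z' by apply: (stick _ _ z) => //; lra.
have Ez := He z; have Ez' := He z'.
have a1 : T <= z <= T + e by apply/andP; rewrite -/T; lra.
have a2 : T <= z' <= T + e by apply/andP; lra.
move: (Ez a1) (Ez' a2); rewrite Zz Zz' => {}Ez {}Ez'.
have : r * (z' - z) = 0 by lra.
move/eqP; rewrite mulf_eq0 => /orP[/eqP r0|]; last by rewrite subr_eq0 gt_eqF.
move: Ez; rewrite r0 mul0r addr0 => Ed.
have ET : gamma a T = gamma b T by lra.
exists T; split => //.
  rewrite lt_def T0 andbT; apply/eqP => T0'.
  by move: N0; rewrite -T0' ET eqxx.
move=> s /andP[s0 sT] Es.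
by have := Tlb s (conj s0 Es); lra.
Qed.

Lemma mom_step (S : pred 'I_n) t (u w : 'I_n -> R) : 0 < t ->
  (forall i c, S i -> gamma c t = gamma i t -> S c) ->
  (forall j, rslope (gamma j) t (u j)) -> (forall j, lslope (gamma j) t (w j)) ->
  \sum_(i | S i) m i * u i = \sum_(i | S i) m i * w i.
Proof.
move=> t0 cl Hu Hw.
have mpos : forall i, 0 < m i by case: Hps.
pose B i := \sum_(j | gamma j t == gamma i t) m j.
pose A i := \sum_(j | gamma j t == gamma i t) m j * w j.
have Bpos : forall i, 0 < B i.
  move=> i; rewrite /B (bigD1 i) //=.
  have : 0 <= \sum_(j | (gamma j t == gamma i t) && (j != i)) m j.
    by apply: sumr_ge0 => j _; exact: ltW.
  have := mpos i; lra.
have uE : forall i, u i = A i / B i.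
  move=> i; apply: (rslope_uniq _ _ _ _ (Hu i)).
  by case: Hst => _ _ _ _ H; apply: H => // j _; exact: Hw.
have BE : forall i j, gamma j t = gamma i t -> B j = B i.
  by move=> i j E; rewrite /B; apply: eq_bigl => k; rewrite E.
have SC : forall i, S i -> forall F : 'I_n -> R,
    \sum_(j | gamma j t == gamma i t) F j
    = \sum_(j | S j && (gamma j t == gamma i t)) F j.
  move=> i Si F; apply: eq_bigl => j; case: eqP => E; rewrite ?andbT ?andbF //.
  by rewrite (cl i j Si E).
transitivity (\sum_(i | S i) \sum_(j | S j)
   (if gamma j t == gamma i t then m i * m j * w j / B j else 0)).
  apply: eq_bigr => i Si; rewrite uE /A SC // big_mkcondr /=.
  set X := \sum_(j | S j) _.
  have -> : m i * (X / B i) = X * (m i / B i) by rewrite mulrCA mulrA.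
  rewrite big_distrl /=; apply: eq_bigr => j Sj.
  case: eqP => E; last by rewrite mul0r.
  by rewrite (BE i j E); ring.
rewrite exchange_big /=; apply: eq_bigr => j Sj.
rewrite -big_mkcondr /=.
transitivity (\sum_(i | S i && (gamma j t == gamma i t)) m i * (m j * w j / B j)).
  by apply: eq_bigr => i _; rewrite !mulrA.
rewrite -big_distrl /=.
have -> : \sum_(i | S i && (gamma j t == gamma i t)) m i = B j.
  rewrite /B; symmetry; apply: eq_bigl => i; rewrite eq_sym.
  case: eqP => E; rewrite ?andbT ?andbF //.
  by rewrite (cl j i Sj (esym E)).
have := Bpos j; move=> Bj; field.
by rewrite gt_eqF.
Qed.

Lemma mom_interval (S : pred 'I_n) T : 0 < T ->
  (forall t i c, 0 < t < T -> S i -> gamma c t = gamma i t -> S c) ->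
  \sum_(i | S i) m i * gamma i T =
  \sum_(i | S i) m i * x i + T * \sum_(i | S i) m i * v i.
Proof.
move=> T0 cl.
pose Phi s := \sum_(i | S i) m i * gamma i s.
pose V := \sum_(i | S i) m i * v i.
have Phi0 : Phi 0 = \sum_(i | S i) m i * x i by apply: eq_bigr => i _; rewrite g0.
have PhiR : forall t (u : 'I_n -> R), (forall i, rslope (gamma i) t (u i)) ->
    rslope Phi t (\sum_(i | S i) m i * u i).
  move=> t u Hu; rewrite /Phi.
  apply: (rslope_sum _ _ _ (fun i s => m i * gamma i s) (fun i => m i * u i)).
  by move=> i _ /=; exact: (rslopeZ _ _ _ _ (Hu i)).
have PhiL : forall t (u : 'I_n -> R), (forall i, lslope (gamma i) t (u i)) ->
    lslope Phi t (\sum_(i | S i) m i * u i).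
  move=> t u Hu; rewrite /Phi.
  apply: (lslope_sum _ _ _ (fun i s => m i * gamma i s) (fun i => m i * u i)).
  by move=> i _ /=; exact: (lslopeZ _ _ _ _ (Hu i)).
suff H : Phi T = Phi 0 + V * T by rewrite -/(Phi T) H Phi0 mulrC.
pose A := [set tau | 0 <= tau <= T /\
             forall s, 0 <= s <= tau -> Phi s = Phi 0 + V * s]%classic.
have A0 : A 0.
  split; first by rewrite lexx ltW.
  move=> s /andP[s0 s1]; have s00 : s = 0 by lra.
  by rewrite s00 mulr0 addr0.
have hA : has_sup A by split; [exists 0 | exists T => tau [/andP[_ ?]]].
set sg := sup A.
have sg0 : 0 <= sg by apply: sup_upper_bound.
have sgT : sg <= T by apply: ge_sup; [exists 0 | move=> tau [/andP[]]].
have before : forall s, 0 <= s < sg -> Phi s = Phi 0 + V * s.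
  move=> s /andP[s0 ss]; have sp : 0 < sg - s by lra.
  have [tau [_ Htau] taul] := sup_adherent sp hA.
  by apply: Htau; apply/andP; split => //; move: taul; rewrite -/sg; lra.
have lamV : 0 < sg -> forall w : 'I_n -> R, (forall i, lslope (gamma i) sg (w i)) ->
    Phi sg = Phi 0 + V * sg /\ \sum_(i | S i) m i * w i = V.
  move=> sgp w Hw; have [e e0 He] := PhiL sg w Hw.
  move: (\sum_(i | S i) m i * w i) He => lam He.
  have M0 : 0 < Num.min e sg by rewrite lt_min e0 sgp.
  have M1 : Num.min e sg <= e by rewrite ge_min lexx.
  have M2 : Num.min e sg <= sg by rewrite ge_min lexx orbT.
  move: M0 M1 M2; set M := Num.min e sg => M0 M1 M2.
  have E1 := He (sg - M); have E2 := He (sg - M / 2).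
  have B1 := before (sg - M); have B2 := before (sg - M / 2).
  have a1 : sg - e <= sg - M <= sg by apply/andP; lra.
  have a2 : sg - e <= sg - M / 2 <= sg by apply/andP; lra.
  have b1 : 0 <= sg - M < sg by apply/andP; lra.
  have b2 : 0 <= sg - M / 2 < sg by apply/andP; lra.
  have c1 : 0 <= sg - M by lra.
  have c2 : 0 <= sg - M / 2 by lra.
  move: (E1 a1 c1) (E2 a2 c2) (B1 b1) (B2 b2) => {}E1 {}E2 {}B1 {}B2.
  have : lam * M = V * M by lra.
  have Mn : M != 0 by rewrite gt_eqF.
  move/(mulIf Mn) => lV; split => //.
  by rewrite lV in E1; lra.
have Hsg : Phi sg = Phi 0 + V * sg.
  have [->|sgn] := eqVneq sg 0; first by rewrite mulr0 addr0.
  have sgp : 0 < sg by rewrite lt_def sgn sg0.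
  have [w Hw] := choice (fun i => gl i sg sgp).
  by case: (lamV sgp w Hw).
have [sgT'|sgl] := eqVneq sg T; first by rewrite -sgT'.
have sglt : sg < T by rewrite lt_def eq_sym sgl sgT.
have [u Hu] := choice (fun i => gr i sg sg0).
have rV : \sum_(i | S i) m i * u i = V.
  have [sgz|sgn] := eqVneq sg 0.
    apply: eq_bigr => i _; congr (_ * _).
    apply: (rslope_uniq (gamma i) sg); first exact: Hu.
    by rewrite sgz; case: Hst.
  have sgp : 0 < sg by rewrite lt_def sgn sg0.
  have [w Hw] := choice (fun i => gl i sg sgp).
  rewrite (mom_step S sg u w sgp) //; first by case: (lamV sgp w Hw).
  by move=> i c Si E; apply: (cl sg i c) => //; apply/andP.
have [e e0 He] := PhiR sg u Hu; rewrite rV in He.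
have M0 : 0 < Num.min e (T - sg) by rewrite lt_min e0 subr_gt0.
have M1 : Num.min e (T - sg) <= e by rewrite ge_min lexx.
have M2 : Num.min e (T - sg) <= T - sg by rewrite ge_min lexx orbT.
move: M0 M1 M2; set M := Num.min e (T - sg) => M0 M1 M2.
have Atau : A (sg + M).
  split; first by apply/andP; lra.
  move=> s /andP[s0 s1]; have [ssg|ssg] := ltP s sg.
    by apply: before; apply/andP.
  have a : sg <= s <= sg + e by apply/andP; lra.
  rewrite (He s a) Hsg; ring.
have := sup_upper_bound hA Atau; rewrite -/sg; lra.
Qed.

End Dyn.



Section Hull.
Context {R : realType} (n : nat) (m v : 'I_n -> R) (f : R -> R).
Hypothesis mpos : forall i, 0 < m i.
Hypothesis hf : forall (k : nat) (y : R), (k < n)%N ->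
      mass_prefix m k <= y <= mass_prefix m k.+1 ->
      f y = mom_prefix m v k
            + (y - mass_prefix m k)
              * (mom_prefix m v k.+1 - mom_prefix m v k)
              / (mass_prefix m k.+1 - mass_prefix m k).

Lemma pref_split (F : 'I_n -> R) j k : (j <= k)%N ->
  \sum_(i < n | (i < k)%N) F i =
  \sum_(i < n | (i < j)%N) F i + \sum_(i < n | (j <= i < k)%N) F i.
Proof.
move=> jk; rewrite (bigID (fun i : 'I_n => (i < j)%N)) /=; congr (_ + _).
  apply: eq_bigl => i; case: (ltnP i j) => H; rewrite ?andbT ?andbF //.
  exact: leq_trans H jk.
apply: eq_bigl => i; case: (ltnP i j) => H; rewrite ?andbT ?andbF //=;
  by rewrite ?leqNgt ?H.
Qed.

Arguments pref_split F [j k].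

Lemma pref_succ (F : 'I_n -> R) i (Hi : (i < n)%N) :
  \sum_(i' < n | (i' < i.+1)%N) F i' = \sum_(i' < n | (i' < i)%N) F i' + F (Ordinal Hi).
Proof.
rewrite (pref_split F (leqnSn i)); congr (_ + _).
apply: big_pred1 => i' /=; rewrite ltnS -eqn_leq.
by apply/eqP/eqP => [/eqP|->//]; rewrite eq_sym => /eqP E; apply: val_inj.
Qed.

Lemma pref0 (F : 'I_n -> R) : \sum_(i' < n | (i' < 0)%N) F i' = 0.
Proof. by rewrite big_pred0 // => i; rewrite ltn0. Qed.

Notation M := (mass_prefix m).
Notation P := (mom_prefix m v).

Lemma M_mono j k : (j <= k)%N -> M j <= M k.
Proof.
move=> jk; rewrite /mass_prefix (pref_split _ jk) lerDl.
by apply: sumr_ge0 => i _; apply: ltW.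
Qed.

Arguments M_mono [j k].

Lemma M_succ i (Hi : (i < n)%N) : M i.+1 = M i + m (Ordinal Hi).
Proof. by rewrite /mass_prefix pref_succ. Qed.

Arguments M_succ [i].

Lemma M_smono j k : (j < k)%N -> (k <= n)%N -> M j < M k.
Proof.
move=> jk kn; have jn : (j < n)%N by apply: leq_trans jk kn.
apply: (lt_le_trans _ (M_mono jk)); rewrite (M_succ jn).
by have := mpos (Ordinal jn); lra.
Qed.

Arguments M_smono [j k].

Lemma M0 : M 0 = 0.
Proof. exact: pref0. Qed.

Lemma f_at i : (0 < n)%N -> (i <= n)%N -> f (M i) = P i.
Proof.
move=> n0; rewrite leq_eqVlt => /orP[/eqP->|ilt].
  have e : n.-1.+1 = n := prednK n0.
  have n1 : (n.-1 < n)%N by rewrite -{2}e.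
  have Mlt : M n.-1 < M n by apply: M_smono; rewrite ?e.
  rewrite (hf _ _ n1); last by rewrite e lexx andbT ltW.
  rewrite e; field; by rewrite subr_eq0 gt_eqF.
rewrite (hf _ _ ilt); first by rewrite subrr !mul0r addr0.
by rewrite lexx /=; apply: M_mono.
Qed.

Arguments f_at [i].

Lemma seg_loc k : (k < n)%N -> forall y, 0 <= y <= M k.+1 ->
  exists i, (i <= k)%N /\ M i <= y <= M i.+1.
Proof.
elim: k => [|k IH] kn y /andP[y0 y1].
  by exists 0%N; split => //; rewrite M0 y0.
have [yk|yk] := leP y (M k.+1).
  have [i [ik Hi]] := IH (ltnW kn) y (introT andP (conj y0 yk)).
  by exists i; split => //; apply: leq_trans ik _.
by exists k.+1; split => //; rewrite y1 ltW.
Qed.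

Definition Bnd := \sum_(i < n) `|m i * v i|.

Lemma P_lb k : - Bnd <= P k.
Proof.
rewrite /Bnd /mom_prefix.
have : 0 <= \sum_(i < n) ((if (i < k)%N then m i * v i else 0) + `|m i * v i|).
  apply: sumr_ge0 => i _; case: ifP => _; last by rewrite add0r normr_ge0.
  by have := ler_norm (- (m i * v i)); rewrite normrN; lra.
by rewrite big_split /= -big_mkcond /=; lra.
Qed.

Lemma f_lb y : (0 < n)%N -> 0 <= y <= M n -> - Bnd <= f y.
Proof.
move=> n0 /andP[y0 y1].
have e : n.-1.+1 = n := prednK n0.
have n1 : (n.-1 < n)%N by rewrite -{2}e.
have y1' : y <= M n.-1.+1 by rewrite e.
have [i [ii /andP[yi1 yi2]]] := seg_loc _ n1 _ (introT andP (conj y0 y1')).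
have iln : (i < n)%N by apply: leq_ltn_trans ii n1.
have Mi := M_succ iln.
have mi := mpos (Ordinal iln).
rewrite (hf _ _ iln); last by apply/andP.
rewrite Mi.
set D := m (Ordinal iln).
set th := (y - mass_prefix m i) / D.
have -> : (y - mass_prefix m i) * (mom_prefix m v i.+1 - mom_prefix m v i) /
     (mass_prefix m i + D - mass_prefix m i) =
     th * (mom_prefix m v i.+1 - mom_prefix m v i).
  rewrite /th; field; by rewrite gt_eqF.
have th0 : 0 <= th by apply: divr_ge0; [rewrite subr_ge0 | apply: ltW].
have th1 : th <= 1.
  rewrite /th ler_pdivrMr // mul1r; move: yi2; rewrite Mi /D; lra.
have P0 := P_lb i; have P1 := P_lb i.+1.
have h1 : 0 <= (1 - th) * (mom_prefix m v i + Bnd) by apply: mulr_ge0; lra.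
have h2 : 0 <= th * (mom_prefix m v i.+1 + Bnd) by apply: mulr_ge0; lra.
lra.
Qed.

Lemma hull_ineq j k l : (j < k)%N -> (k < l)%N -> (l <= n)%N ->
  convex_envelope 0 (M n) f (M k) = P k ->
  (P k - P j) * (M l - M k) <= (P l - P k) * (M k - M j).
Proof.
move=> jk kl ln Henv.
have n0 : (0 < n)%N by apply: (leq_trans _ ln); apply: (leq_trans _ kl).
have kn : (k <= n)%N by apply: ltnW; apply: leq_trans kl ln.
have jn : (j <= n)%N by apply: leq_trans (ltnW jk) kn.
have D1 : 0 < M k - M j by rewrite subr_gt0; apply: M_smono.
have D2 : 0 < M l - M k by rewrite subr_gt0; apply: M_smono.
set lam := (M l - M k) / (M k - M j + (M l - M k)).
have Mk : M k = lam * M j + (1 - lam) * M l.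
  rewrite /lam; field; rewrite gt_eqF //; lra.
have l0 : 0 <= lam by apply: divr_ge0; lra.
have l1 : lam <= 1 by rewrite /lam ler_pdivrMr ?mul1r; lra.
have r0 : forall i, (i <= n)%N -> 0 <= M i <= M n.
  by move=> i ii; rewrite -M0 !M_mono.
have : P k <= lam * P j + (1 - lam) * P l.
  rewrite -Henv /convex_envelope; apply: ge_sup.
    exists (- Bnd), (fun _ => - Bnd); split => //.
      by move=> y z l' _ _ _; rewrite -mulrDl addrC subrK mul1r.
    by move=> z; apply: f_lb.
  move=> u [g [gc gf ->]].
  rewrite Mk.
  apply: (le_trans (gc _ _ _ (r0 _ jn) (r0 _ ln) (introT andP (conj l0 l1)))).
  rewrite -(f_at n0 jn) -(f_at n0 ln).
  have := gf _ (r0 _ jn); have := gf _ (r0 _ ln) => g1 g2.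
  have : lam * g (M j) <= lam * f (M j) by apply: ler_wpM2l.
  have : (1 - lam) * g (M l) <= (1 - lam) * f (M l) by apply: ler_wpM2l; lra.
  lra.
move=> H.
have Ds : 0 < M k - M j + (M l - M k) by lra.
have := ler_wpM2l (ltW Ds) H.
have -> : (M k - M j + (M l - M k)) * (lam * P j + (1 - lam) * P l) =
   (M l - M k) * P j + (M k - M j) * P l.
  rewrite /lam; field; rewrite gt_eqF //.
lra.
Qed.

End Hull.



Theorem lemma3p1 (R : realType) (n : nat) (m x v : 'I_n -> R)
    (gamma : 'I_n -> R -> R) (f : R -> R) :
  particle_system m x ->
  sticky_trajectories m x v gamma ->
  (forall (k : nat) (y : R), (k < n)%N ->
      mass_prefix m k <= y <= mass_prefix m k.+1 ->
      f y = mom_prefix m v k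
            + (y - mass_prefix m k)
              * (mom_prefix m v k.+1 - mom_prefix m v k)
              / (mass_prefix m k.+1 - mass_prefix m k)) ->
  forall (k : nat) (p q : 'I_n),
    (k <= n)%N ->
    convex_envelope 0 (mass_prefix m n) f (mass_prefix m k) = mom_prefix m v k ->
    (p < k <= q)%N ->
    forall t : R, 0 <= t -> gamma p t <> gamma q t.
Proof.
move=> Hps Hst hf k p q kn Henv /andP[pk kq] t t0 Ept.
have mpos : forall i, 0 < m i by case: Hps.
have xlt : forall i j : 'I_n, (i < j)%N -> x i < x j by case: Hps => _ H i j /H.
have ord : forall (a b : 'I_n) s, (a <= b)%N -> 0 <= s -> gamma a s <= gamma b s.
  by move=> a b s ab s0; apply: (traj_order _ _ _ _ _ Hps Hst).
have qn := ltn_ord q.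
have kn' : (k < n)%N by lia.
have k1n : (k.-1 < n)%N by lia.
pose a0 : 'I_n := Ordinal k1n.
pose b0 : 'I_n := Ordinal kn'.
have ab0 : (a0 < b0)%N by rewrite /= ; lia.
have Eab : gamma a0 t = gamma b0 t.
  have h1' : (p <= a0)%N by rewrite /=; lia.
  have h3' : (b0 <= q)%N by [].
  have h1 := ord p a0 t h1' t0.
  have h2 := ord a0 b0 t (ltnW ab0) t0.
  have h3 := ord b0 q t h3' t0.
  lra.
have N0 : gamma a0 0 != gamma b0 0.
  by rewrite !(g0 _ _ _ _ _ Hst) lt_eqF // xlt.
have [T [T0 ET before]] := first_time _ _ _ _ _ Hst a0 b0 t t0 Eab N0.
set X := gamma a0 T.
pose SL := fun i : 'I_n => (i < k)%N && (gamma i T == X).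
pose SR := fun i : 'I_n => (k <= i)%N && (gamma i T == X).
have clL : forall s i c, 0 < s < T -> SL i -> gamma c s = gamma i s -> SL c.
  move=> s i c /andP[s0 sT] /andP[ik /eqP iX] E.
  apply/andP; split.
    rewrite ltnNge; apply/negP => kc.
    have h1' : (i <= a0)%N by rewrite /=; lia.
    have h1 := ord i a0 s h1' (ltW s0).
    have h2 := ord a0 b0 s (ltnW ab0) (ltW s0).
    have h3 := ord b0 c s kc (ltW s0).
    apply: (before s); [apply/andP; split => //; exact: ltW | lra].
  by rewrite -iX (stick _ _ _ _ _ Hst c i s T (ltW s0) (ltW sT) E).
have clR : forall s i c, 0 < s < T -> SR i -> gamma c s = gamma i s -> SR c.
  move=> s i c /andP[s0 sT] /andP[ik /eqP iX] E.
  apply/andP; split.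
    rewrite leqNgt; apply/negP => ck.
    have h1' : (c <= a0)%N by rewrite /=; lia.
    have h1 := ord c a0 s h1' (ltW s0).
    have h2 := ord a0 b0 s (ltnW ab0) (ltW s0).
    have h3 := ord b0 i s ik (ltW s0).
    apply: (before s); [apply/andP; split => //; exact: ltW | lra].
  by rewrite -iX (stick _ _ _ _ _ Hst c i s T (ltW s0) (ltW sT) E).
have ML := mom_interval _ _ _ _ _ Hps Hst SL T T0 clL.
have MR := mom_interval _ _ _ _ _ Hps Hst SR T T0 clR.
have sumX : forall S : pred 'I_n, (forall i, S i -> gamma i T = X) ->
    \sum_(i | S i) m i * gamma i T = X * \sum_(i | S i) m i.
  move=> S HS; rewrite mulr_sumr; apply: eq_bigr => i Si; rewrite HS //; ring.
rewrite sumX in ML; last by move=> i /andP[_ /eqP].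
rewrite sumX in MR; last by move=> i /andP[_ /eqP].
have SLa0 : SL a0 by rewrite /SL /= eqxx andbT; lia.
have SRb0 : SR b0 by rewrite /SR /= leqnn /X ET eqxx.
have [j SLj jmin] := arg_minnP (fun i : 'I_n => val i) SLa0.
have [l SRl lmax] := arg_maxnP (fun i : 'I_n => val i) SRb0.
have jk : (j < k)%N by case/andP: SLj.
have kl : (k <= l)%N by case/andP: SRl.
have SLE : forall i : 'I_n, SL i = (j <= i < k)%N.
  move=> i; apply/idP/idP.
    by move=> Si; have := jmin i Si; case/andP: Si => ik _ ji; rewrite ji ik.
  move=> /andP[ji ik]; rewrite /SL ik /=; apply/eqP.
  have ia : (i <= a0)%N by rewrite /=; lia.
  have hj := ord j i T ji (ltW T0); have ha := ord i a0 T ia (ltW T0).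
  case/andP: SLj => _ /eqP jX; rewrite /X in jX ha *; lra.
have SRE : forall i : 'I_n, SR i = (k <= i < l.+1)%N.
  move=> i; apply/idP/idP.
    move=> Si; have li : (i <= l)%N := lmax i Si; case/andP: Si => ik _; by rewrite ik ltnS li.
  move=> /andP[ki il]; rewrite /SR ki /=; apply/eqP.
  have bi : (b0 <= i)%N by [].
  have il' : (i <= l)%N by rewrite -ltnS.
  have hl := ord i l T il' (ltW T0); have hb := ord b0 i T bi (ltW T0).
  case/andP: SRl => _ /eqP lX; rewrite /X in lX hb *; lra.
have sL : forall F : 'I_n -> R, \sum_(i | SL i) F i =
    \sum_(i < n | (i < k)%N) F i - \sum_(i < n | (i < j)%N) F i.
  move=> F; rewrite (eq_bigl _ _ SLE) (pref_split n F j k (ltnW jk)); ring.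
have sR : forall F : 'I_n -> R, \sum_(i | SR i) F i =
    \sum_(i < n | (i < l.+1)%N) F i - \sum_(i < n | (i < k)%N) F i.
  move=> F; rewrite (eq_bigl _ _ SRE) (pref_split n F k l.+1 (leqW kl)); ring.
have pos : forall (S : pred 'I_n) i, S i -> 0 < \sum_(i | S i) m i.
  move=> S i Si; rewrite (bigD1 i) //=.
  have : 0 <= \sum_(i0 | S i0 && (i0 != i)) m i0 by apply: sumr_ge0 => i0 _; apply: ltW.
  have := mpos i; lra.
have MLp := pos SL a0 SLa0; have MRp := pos SR b0 SRb0.
have XL : \sum_(i | SL i) m i * x i <= (\sum_(i | SL i) m i) * x a0.
  rewrite mulr_suml; apply: ler_sum => i /andP[ik _]; apply: ler_wpM2l; first exact: ltW.
  have : (i <= a0)%N by rewrite /=; lia.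
  rewrite leq_eqVlt => /orP[/eqP/val_inj->//|/xlt]; exact: ltW.
have XR : (\sum_(i | SR i) m i) * x b0 <= \sum_(i | SR i) m i * x i.
  rewrite mulr_suml; apply: ler_sum => i /andP[ki _]; apply: ler_wpM2l; first exact: ltW.
  have : (b0 <= i)%N by [].
  rewrite leq_eqVlt => /orP[/eqP/val_inj->//|/xlt]; exact: ltW.
have sLm : \sum_(i | SL i) m i = mass_prefix m k - mass_prefix m j := sL m.
have sRm : \sum_(i | SR i) m i = mass_prefix m l.+1 - mass_prefix m k := sR m.
have sLv : \sum_(i | SL i) m i * v i = mom_prefix m v k - mom_prefix m v j
  := sL (fun i => m i * v i).
have sRv : \sum_(i | SR i) m i * v i = mom_prefix m v l.+1 - mom_prefix m v k
  := sR (fun i => m i * v i).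
have H := hull_ineq n m v f mpos hf j k l.+1 jk (kl : (k < l.+1)%N) (ltn_ord l) Henv.
rewrite -sLm -sRm -sLv -sRv in H.
move: ML MR XL XR H MLp MRp.
set A1 := \sum_(i | SL i) m i; set A2 := \sum_(i | SR i) m i.
set B1 := \sum_(i | SL i) m i * x i; set B2 := \sum_(i | SR i) m i * x i.
set C1 := \sum_(i | SL i) m i * v i; set C2 := \sum_(i | SR i) m i * v i.
move=> ML MR XL XR H A1p A2p.
have xab := xlt a0 b0 ab0.
have e1 : X * A1 * A2 = (B1 + T * C1) * A2 by rewrite ML.
have e2 : X * A2 * A1 = (B2 + T * C2) * A1 by rewrite MR.
have h1 : B1 * A2 <= A1 * x a0 * A2 by apply: ler_wpM2r => //; apply: ltW.
have h2 : A2 * x b0 * A1 <= B2 * A1 by apply: ler_wpM2r => //; apply: ltW.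
have h3 : T * (C1 * A2) <= T * (C2 * A1) by apply: ler_wpM2l => //; apply: ltW.
have h4 : 0 < A1 * A2 * (x b0 - x a0) by rewrite !mulr_gt0 // subr_gt0.
lra.
Qed.
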